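(* Let $G$ be an unweighted digraph without loops with directed deformed graph Laplacian $M(t)$. If $\lambda\notin\{1,-1\}$ is a finite eigenvalue of the directed deformed graph Laplacian $M_i(t)$ of exactly one strongly connected or single node component $G_i$ of $G$ (and of no other component's), then the geometric multiplicity of $\lambda$ as an eigenvalue of $M(t)$ equals its geometric multiplicity as an eigenvalue of $M_i(t)$.
   Context: A digraph $G=(V,E)$, no loops or multiple edges, adjacency matrix $A$; $S=A\circ A^T$, $D=\mathrm{diag}(\mathrm{diag}(A^2))$; $M(t)=I-At+(D-I)t^2+(A-S)t^3$, and similarly $M_i(t)$ for the component $G_i$. Components are the induced subgraphs on the classes of ''$i=j$ or mutually reachable by directed walks''. The geometric multiplicity of an eigenvalue $\lambda$ is $\dim\ker M(\lambda)$. *)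

(* Defs.v *)
From HB Require Import structures.
From mathcomp Require Import all_boot all_order all_algebra.
Set Implicit Arguments. Unset Strict Implicit. Unset Printing Implicit Defensive.
Import Order.TTheory GRing.Theory Num.Theory.
Local Open Scope ring_scope.

(* A digraph on vertex set 'I_n is an edge relation e : rel 'I_n
   (no multiple edges automatically; "no loops" is the hypothesis ~~ e i i). *)

Definition adj (C : fieldType) (n : nat) (e : rel 'I_n) : 'M[C]_n :=
  \matrix_(i, j) (e i j)%:R.

Definition subadj (C : fieldType) (n : nat) (e : rel 'I_n) (K : {set 'I_n})
  : 'M[C]_#|K| :=
  \matrix_(a, b) (e (enum_val a) (enum_val b))%:R.

Definition Smx (C : fieldType) (m : nat) (A : 'M[C]_m) : 'M[C]_m :=
  \matrix_(i, j) (A i j * A j i).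

Definition Dmx (C : fieldType) (m : nat) (A : 'M[C]_m) : 'M[C]_m :=
  \matrix_(i, j) (if i == j then (A *m A) i i else 0).

Definition Mt (C : fieldType) (m : nat) (A : 'M[C]_m) (t : C) : 'M[C]_m :=
  1%:M - t *: A + t ^+ 2 *: (Dmx A - 1%:M) + t ^+ 3 *: (A - Smx A).

Definition is_eigenvalue (C : fieldType) (m : nat) (M : C -> 'M[C]_m) (l : C)
  : bool := \det (M l) == 0.

(* geometric multiplicity: dim ker M(lambda) (right kernel {x | M x = 0},
   represented as the row kernel of the transpose) *)
Definition geom_mult (C : fieldType) (m : nat) (M : C -> 'M[C]_m) (l : C)
  : nat := \rank (kermx (M l)^T).

Definition component (n : nat) (e : rel 'I_n) (i : 'I_n) : {set 'I_n} :=
  [set j | connect e i j && connect e j i].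

Arguments adj C {n} e.
Arguments subadj C {n} e K.

(* Main.v *)
Require Import Defs.
From HB Require Import structures.
From mathcomp Require Import all_boot all_order all_algebra.
From mathcomp Require Import zify.
From Stdlib Require Import Lia.
Import Order.TTheory GRing.Theory Num.Theory.
Local Open Scope ring_scope.
Set Implicit Arguments. Unset Strict Implicit.

Lemma sum_ind (R : ringType) n (S : {set 'I_n}) (f : 'I_n -> R) u :
  \sum_(b < #|S|) f (enum_val b) * (u == enum_val b)%:R = if u \in S then f u else 0.
Proof.
case: ifP => uS.
  rewrite (bigD1 (enum_rank_in uS u)) //= enum_rankK_in // eqxx mulr1 big1 ?addr0 //.
  move=> b nb; case: eqP => [Eu|]; last by rewrite mulr0.
  by case/eqP: nb; apply: enum_val_inj; rewrite enum_rankK_in.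
apply: big1 => b _; case: eqP => [Eu|]; last by rewrite mulr0.
by move: (enum_valP b); rewrite -Eu uS.
Qed.

Lemma sum_ind' (R : ringType) n (S : {set 'I_n}) (f : 'I_n -> R) u :
  \sum_(b < #|S|) (u == enum_val b)%:R * f (enum_val b) = if u \in S then f u else 0.
Proof.
rewrite -(sum_ind S f u); by apply: eq_bigr => b _; rewrite commr_nat.
Qed.

Lemma Mt_entry (C : fieldType) n (e : rel 'I_n) j l (a b : 'I_#|component e j|) :
  Mt (subadj C e (component e j)) l a b = Mt (adj C e) l (enum_val a) (enum_val b).
Proof.
rewrite /Mt !mxE.
have inj : (enum_val a == enum_val b) = (a == b).
  by apply/eqP/eqP => [/enum_val_inj|->].
rewrite inj; case: eqP => // <-; congr (_ + _ * (_ - _) + _).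
under eq_bigr do rewrite !mxE.
rewrite -(big_enum_val (fun w => (e (enum_val a) w)%:R * (e w (enum_val a))%:R)) /=.
rewrite big_mkcond /=; apply: eq_bigr => w _; rewrite !mxE.
case: ifP => // wK.
have vK : enum_val a \in component e j by apply: enum_valP.
case E1: (e _ w); case E2: (e w _); rewrite ?mul0r ?mulr0 //.
move: vK wK; rewrite !inE => /andP[c1 c2].
rewrite (connect_trans c1 (connect1 E1)) (connect_trans (connect1 E2) c2) //.
Qed.

Lemma Mt_supp (C : fieldType) n (e : rel 'I_n) l v w :
  Mt (adj C e) l v w != 0 -> connect e v w.
Proof.
case: (eqVneq v w) => [-> _|nvw]; first exact: connect0.
rewrite /Mt !mxE (negbTE nvw) /=.
case E: (e v w); first by move=> _; exact: connect1.
by rewrite /= !(mul0r, mulr0, subrr, subr0, sub0r, oppr0, addr0, add0r) eqxx.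
Qed.

Lemma compP n (e : rel 'I_n) j u :
  reflect (connect e j u /\ connect e u j) (u \in component e j).
Proof. by rewrite inE; apply: andP. Qed.

Lemma lemG (C : fieldType) n (e : rel 'I_n) l (i0 : 'I_n)
  (hC : forall j, component e j != component e i0 ->
        \det (Mt (subadj C e (component e j)) l) != 0)
  (x : 'I_n -> C) (Tp : pred 'I_n) :
  (forall v, \sum_w Mt (adj C e) l v w * x w = 0) ->
  (forall w u, Tp w -> connect e w u -> Tp u) ->
  (forall w, Tp w -> x w != 0 -> w \notin component e i0) ->
  forall w, Tp w -> x w = 0.
Proof.
move=> hx hT hK w0 Tw0; apply/eqP; apply/negPn/negP => xw0.
pose P m := [exists w, [&& Tp w, x w != 0 & #|[set u | connect e w u]| == m]].
have exP : exists m, P m by exists #|[set u | connect e w0 u]|; apply/existsP; exists w0; rewrite Tw0 xw0 eqxx.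
case: (ex_minnP exP) => m /existsP[w /and3P[Tw xw /eqP Hm]] minm.
set K := component e w.
have wK : w \in K by rewrite inE connect0.
have KK : K != component e i0.
  by apply: contraNneq (hK w Tw xw) => <-.
have U : Mt (subadj C e K) l \in unitmx by rewrite unitmxE unitfE hC.
pose y : 'cV[C]_#|K| := \col_a x (enum_val a).
have Hy : Mt (subadj C e K) l *m y = 0.
  apply/matrixP => a z; rewrite !mxE /K.
  under eq_bigr do rewrite Mt_entry [y _ _]mxE.
  set v := enum_val a.
  have vK : v \in K by apply: enum_valP.
  rewrite -(big_enum_val (fun u => Mt (adj C e) l v u * x u)) /=.
  rewrite -[RHS](hx v) [RHS](bigID (fun u => u \in K)) /= [X in _ = _ + X]big1 ?addr0 //.
  move=> u uK; case: (eqVneq (Mt (adj C e) l v u) 0) => [->|nz]; first by rewrite mul0r.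
  have cvu := Mt_supp nz.
  have [cwv cvw] : connect e w v /\ connect e v w by apply/compP.
  have cwu := connect_trans cwv cvu.
  case: (eqVneq (x u) 0) => [->|xu]; first by rewrite mulr0.
  exfalso.
  have Pu : P #|[set u' | connect e u u']|.
    by apply/existsP; exists u; rewrite (hT w u Tw cwu) xu eqxx.
  have := minm _ Pu; rewrite -Hm leqNgt => /negP; apply.
  apply: proper_card; apply/properP; split.
    by apply/subsetP => z'; rewrite !inE; apply: connect_trans.
  exists w; first by rewrite inE connect0.
  rewrite inE; apply/negP => cuw; move/negP: uK; apply; apply/compP; split=> //.
have y0 : y = 0 by rewrite -(mulKmx U y) Hy mulmx0.
have := congr1 (fun M : 'cV[C]_#|K| => M (enum_rank_in wK w) 0) y0.
by rewrite /= !mxE enum_rankK_in // => /eqP; rewrite (negbTE xw).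
Qed.

Lemma part1 (C : fieldType) n (e : rel 'I_n) l (i0 : 'I_n)
  (hC : forall j, component e j != component e i0 ->
        \det (Mt (subadj C e (component e j)) l) != 0) :
  (\rank (kermx (Mt (adj C e) l)^T) <=
   \rank (kermx (Mt (subadj C e (component e i0)) l)^T))%N.
Proof.
set N := Mt (adj C e) l; set K := component e i0.
set NK := Mt (subadj C e K) l.
pose R : 'M[C]_(n, #|K|) := \matrix_(w, a) (w == enum_val a)%:R.
have kerP : forall x : 'rV_n, x *m N^T = 0 -> forall v, \sum_w N v w * x 0 w = 0.
  move=> x hx v; transitivity ((x *m N^T) 0 v); last by rewrite hx mxE.
  by rewrite mxE; apply: eq_bigr => w _; rewrite [N^T _ _]mxE mulrC.
have zeroQ : forall x : 'rV_n, x *m N^T = 0 -> forall u, ~~ connect e u i0 -> x 0 u = 0.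
  move=> x hx; apply: (lemG hC (kerP x hx)).
    move=> w u Tw cwu; apply/negP => cui; move/negP: Tw; apply.
    exact: connect_trans cwu cui.
  by move=> w Tw _; apply/negP => /compP[_ cwi]; rewrite cwi in Tw.
have xR : forall x : 'rV_n, x *m R = \row_a x 0 (enum_val a).
  move=> x; apply/matrixP => z a; rewrite !mxE (bigD1 (enum_val a)) //= !mxE eqxx mulr1.
  rewrite big1 ?addr0 ?ord1 // => w /negbTE nw; by rewrite !mxE nw mulr0.
have imK : forall x : 'rV_n, x *m N^T = 0 -> x *m R *m NK^T = 0.
  move=> x hx; apply/matrixP => z a; rewrite xR !mxE.
  under eq_bigr do rewrite [NK^T _ _]mxE /NK /K Mt_entry mxE.
  set v := enum_val a.
  have vK : v \in K by apply: enum_valP.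
  rewrite -(big_enum_val (fun u => x 0 u * N v u)) /=.
  rewrite -[RHS](kerP x hx v) [RHS](bigID (fun u => u \in K)) /= [X in _ = _ + X]big1 ?addr0.
    by apply: eq_bigr => u _; rewrite mulrC.
  move=> u uK; case: (eqVneq (N v u) 0) => [->|nz]; first by rewrite mul0r.
  have cvu := Mt_supp nz.
  have [civ cvi] : connect e i0 v /\ connect e v i0 by apply/compP.
  rewrite (zeroQ x hx u) ?mulr0 //; apply/negP => cui; move/negP: uK; apply.
  by apply/compP; split=> //; exact: connect_trans civ cvu.
have inj : forall x : 'rV_n, x *m N^T = 0 -> x *m R = 0 -> x = 0.
  move=> x hx hR; apply/matrixP => z u; rewrite ord1 mxE.
  apply: (lemG hC (kerP x hx) (Tp := predT)) => // w _ xw.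
  apply/negP => wK; move/eqP: xw; apply.
  have := congr1 (fun M : 'rV_#|K| => M 0 (enum_rank_in wK w)) hR.
  by rewrite /= xR !mxE enum_rankK_in.
set X := kermx N^T.
have XN : forall y : 'rV_n, (y <= X)%MS -> y *m N^T = 0.
  by move=> y /submxP[D ->]; rewrite -mulmxA mulmx_ker mulmx0.
have Y0 : (X :&: kermx R)%MS = 0.
  apply/row_matrixP => i; rewrite row0; set y := row i _.
  have yX : (y <= X)%MS by apply: submx_trans (row_sub _ _) (capmxSl _ _).
  have yR : (y <= kermx R)%MS by apply: submx_trans (row_sub _ _) (capmxSr _ _).
  by apply: inj; [apply: XN | apply/sub_kermxP].
rewrite -(mxrank_mul_ker X R) Y0 mxrank0 addn0; apply: mxrankS.
apply/sub_kermxP; apply/row_matrixP => i; rewrite row0 (row_mul i (X *m R)) (row_mul i X).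
by apply: imK; apply: XN; apply: row_sub.
Qed.

Lemma part2 (C : fieldType) n (e : rel 'I_n) l (i0 : 'I_n) :
  (\rank (Mt (adj C e) l) + #|component e i0| <=
   n + \rank (Mt (subadj C e (component e i0)) l))%N.
Proof.
set N := Mt (adj C e) l; set K := component e i0.
set NK := Mt (subadj C e K) l.
set Q := [set u | ~~ connect e u i0].
set W := ~: (K :|: Q).
pose R : 'M[C]_(n, #|K|) := \matrix_(w, a) (w == enum_val a)%:R.
pose MW : 'M[C]_(#|W|, n) := \matrix_(a, w) N (enum_val a) w.
pose MK : 'M[C]_(#|K|, n) := NK *m R^T.
pose VQ : 'M[C]_(#|Q|, n) := \matrix_(a, w) (w == enum_val a)%:R.
have KQ : K :&: Q = set0.
  apply/setP => u; rewrite !inE; apply/negP => /andP[/andP[_ cui]].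
  by rewrite cui.
have cardn : (#|W| + #|K| + #|Q| = n)%N.
  have := cardsC (K :|: Q); rewrite cardsU KQ cards0 subn0 card_ord -/W.
  by move=> H; rewrite -[RHS]H [RHS]addnC addnA.
pose q v : 'rV[C]_n := \row_u (if u \in Q then N v u else 0).
have qVQ : forall v, (q v <= VQ)%MS.
  move=> v; apply/submxP; exists (\row_a N v (enum_val a)).
  apply/matrixP => z u; rewrite [LHS]mxE [RHS]mxE.
  rewrite -(sum_ind Q (fun w => N v w) u); apply: eq_bigr => b _; by rewrite [VQ _ _]mxE [(\row__ _) _ _]mxE.
have sub : (N <= MW + MK + VQ)%MS.
  apply/row_subP => v.
  case: (boolP (v \in W)) => vW.
    apply: (submx_trans _ (addsmxSl _ _)); apply: (submx_trans _ (addsmxSl _ _)).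
    apply/(eq_row_sub (enum_rank_in vW v)); apply/rowP => u.
    by rewrite !mxE enum_rankK_in.
  move: vW; rewrite inE negbK inE => /orP[vK|vQ].
    have -> : row v N = row (enum_rank_in vK v) MK + q v.
      apply/rowP => u; rewrite [LHS]mxE [RHS]mxE [row _ MK _ _]mxE [q v _ _]mxE /MK [(NK *m _) _ _]mxE.
      rewrite (eq_bigr (fun b => N v (enum_val b) * (u == enum_val b)%:R)); last first.
        by move=> b _; rewrite [R^T _ _]mxE [R _ _]mxE /NK /K Mt_entry enum_rankK_in.
      rewrite sum_ind.
      case: (boolP (u \in K)) => uK; case: (boolP (u \in Q)) => uQ.
      - by have := KQ; move/setP/(_ u); rewrite in_setI uK uQ in_set0.
      - by rewrite addr0.
      - by rewrite add0r.
      - rewrite add0r; apply/eqP; apply: contraR uK => /Mt_supp cvu.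
        have [civ cvi] : connect e i0 v /\ connect e v i0 by apply/compP.
        apply/compP; split; first exact: connect_trans civ cvu.
        by move: uQ; rewrite inE negbK.
    apply: addmx_sub_adds; last exact: qVQ.
    by apply: submx_trans (row_sub _ _) (addsmxSr _ _).
  have -> : row v N = q v.
    apply/rowP => u; rewrite [LHS]mxE [RHS]mxE; case: ifP => // uQ.
    apply: (contraTeq _ vQ) => /Mt_supp cvu; rewrite inE negbK.
    by apply: connect_trans cvu _; move: uQ; rewrite inE => /negbFE.
  by apply: submx_trans (qVQ v) (addsmxSr _ _).
have := mxrankS sub.
have r1 := (mxrank_adds_leqif (MW + MK)%MS VQ).1.
have r2 := (mxrank_adds_leqif MW MK).1.
have r3 := rank_leq_row MW.
have r4 := rank_leq_row VQ.
have r5 : (\rank MK <= \rank NK)%N by apply: mxrankM_maxl.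
lia.
Qed.

Unset Implicit Arguments.
Set Strict Implicit.

Theorem proposition3p7 (C : numClosedFieldType) (n : nat) (e : rel 'I_n)
  (no_loops : forall i, ~~ e i i) (l : C) (i0 : 'I_n) :
  l != 1 -> l != -1 ->
  is_eigenvalue (Mt (subadj C e (component e i0))) l ->
  (forall j : 'I_n, component e j != component e i0 ->
     ~~ is_eigenvalue (Mt (subadj C e (component e j))) l) ->
  geom_mult (Mt (adj C e)) l = geom_mult (Mt (subadj C e (component e i0))) l.
Proof.
move=> _ _ _ hE.
have hC : forall j, component e j != component e i0 ->
        \det (Mt (subadj C e (component e j)) l) != 0.
  by move=> j /hE; rewrite /is_eigenvalue.
have p1 := part1 hC.
have p2 := @part2 C n e l i0.
rewrite /geom_mult; apply/eqP; rewrite eqn_leq p1 /=.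
move: p2; rewrite !mxrank_ker !mxrank_tr.
have := rank_leq_row (Mt (subadj C e (component e i0)) l).
have := rank_leq_row (Mt (adj C e) l).
clear p1; set rN := \rank _; set rK := \rank (Mt _ _); set k := #|component e i0|. lia.
Qed.
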